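(* An $Ł_n$-valued effectivity function $E:\mathcal P N\times Ł_n^S\to Ł_n$ is truly playable if and only if there is a game form $G=(N,\{\Sigma_i\mid i\in N\},S,o)$ such that $E=E_G$.
   Context: For a positive integer $n$ let $Ł_n=\{0,\frac1n,\dots,1\}$ with $\neg x=1-x$, $x\oplus y=\min(x+y,1)$, $x\odot y=\max(x+y-1,0)$, $\wedge=\min$, $\vee=\max$, applied pointwise on $Ł_n^S$; $0,1$ also denote constant functions. Standing assumptions: $N$ finite set of players, $S$ (possibly infinite) set of outcomes, $|N|\ge2$, $|S|\ge2$; coalitions $C\subseteq N$, $\overline C=N\setminus C$. A game form is $G=(N,\{\Sigma_i\mid i\in N\},S,o)$ with nonempty strategy sets $\Sigma_i$ and $o:\prod_{i\in N}\Sigma_i\to S$; $E_G(C,f)=\max_{\sigma_C}\min_{\sigma_{\overline C}} f(o(\sigma_C\sigma_{\overline C}))$, where $\sigma_C$, $\sigma_{\overline C}$ range over joint strategies of $C$ and $\overline C$ and $\sigma_C\sigma_{\overline C}$ is the combined profile. An $Ł_n$-valued effectivity function is any map $E:\mathcal P N\times Ł_n^S\to Ł_n$. It is: outcome monotonic if $f\ge g$ implies $E(C,f)\ge E(C,g)$; $N$-maximal if $\neg E(\varnothing,\neg f)\le E(N,f)$; superadditive if $E(C_1,f)\wedge E(C_2,g)\le E(C_1\cup C_2,f\wedge g)$ whenever $C_1\cap C_2=\varnothing$; homogeneous if $E(C,f\oplus f)=E(C,f)\oplus E(C,f)$ and $E(C,f\odot f)=E(C,f)\odot E(C,f)$; has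 liveness if $E(C,1)=1$ for all $C$; has safety if $E(C,0)=0$ for all $C$; principal if there is $g$ with $\{f\mid E(\varnothing,f)=1\}=\{f\mid f\ge g\odot\cdots\odot g\ (n\text{ factors})\}$. Playable: outcome monotonic, $N$-maximal, superadditive, homogeneous, liveness and safety; truly playable: playable and principal. *)

(* Defs.v *)
From mathcomp Require Import all_boot.
Set Implicit Arguments. Unset Strict Implicit. Unset Printing Implicit Defensive.

(* Ł_n = {0, 1/n, ..., 1}, represented by numerators: k : 'I_n.+1 stands for k/n. *)
Definition Ln (n : nat) := 'I_n.+1.

Section Luk.
Variable n : nat.

Definition lzero : Ln n := ord0.
Definition lone : Ln n := ord_max.
Definition lneg (x : Ln n) : Ln n := inord (n - x).
Definition loplus (x y : Ln n) : Ln n := inord (minn (x + y) n).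
Definition lodot (x y : Ln n) : Ln n := inord ((x + y) - n).
Definition lmin (x y : Ln n) : Ln n := inord (minn x y).
Definition lmax (x y : Ln n) : Ln n := inord (maxn x y).
Definition lle (x y : Ln n) : Prop := (x <= y)%N.

End Luk.

Section Eff.
Variables (n : nat) (N : finType) (S : Type).

Definition fneg (f : S -> Ln n) : S -> Ln n := fun s => lneg (f s).
Definition foplus (f g : S -> Ln n) : S -> Ln n := fun s => loplus (f s) (g s).
Definition fodot (f g : S -> Ln n) : S -> Ln n := fun s => lodot (f s) (g s).
Definition fmin (f g : S -> Ln n) : S -> Ln n := fun s => lmin (f s) (g s).
Definition fconst (c : Ln n) : S -> Ln n := fun _ => c.
Definition fle (f g : S -> Ln n) : Prop := forall s, lle (f s) (g s).
Definition fodot_pow (g : S -> Ln n) : S -> Ln n := iter n.-1 (fodot g) g.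

Definition effectivity_function := {set N} -> (S -> Ln n) -> Ln n.

Variable E : effectivity_function.

Definition outcome_monotonic : Prop :=
  forall C f g, fle g f -> lle (E C g) (E C f).
Definition N_maximal : Prop :=
  forall f, lle (lneg (E set0 (fneg f))) (E setT f).
Definition superadditive : Prop :=
  forall (C1 C2 : {set N}) f g, [disjoint C1 & C2] ->
    lle (lmin (E C1 f) (E C2 g)) (E (C1 :|: C2) (fmin f g)).
Definition homogeneous : Prop :=
  forall C f, E C (foplus f f) = loplus (E C f) (E C f) /\
              E C (fodot f f) = lodot (E C f) (E C f).
Definition liveness : Prop := forall C, E C (fconst (lone n)) = lone n.
Definition safety : Prop := forall C, E C (fconst (lzero n)) = lzero n.
Definition principal : Prop :=
  exists g, forall f, E set0 f = lone n <-> fle (fodot_pow g) f.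

Definition playable : Prop :=
  [/\ outcome_monotonic, N_maximal, superadditive, homogeneous & liveness /\ safety].
Definition truly_playable : Prop := playable /\ principal.

End Eff.

Section GameForm.
Variables (n : nat) (N : finType) (S : Type) (Sigma : N -> Type).
Variable o : (forall i, Sigma i) -> S.

(* A joint strategy of a coalition is represented by a full profile whose
   restriction to the coalition is what matters (strategy sets are nonempty). *)
Definition combine (C : {set N}) (p q : forall i, Sigma i) : forall i, Sigma i :=
  fun i => if i \in C then p i else q i.

Definition is_least (P : Ln n -> Prop) (v : Ln n) : Prop :=
  P v /\ forall w, P w -> lle v w.
Definition is_greatest (P : Ln n -> Prop) (v : Ln n) : Prop :=
  P v /\ forall w, P w -> lle w v.

(* v = E_G(C, f) = max_{σ_C} min_{σ_{N\C}} f(o(σ_C σ_{N\C})) *)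
Definition EG_value (C : {set N}) (f : S -> Ln n) (v : Ln n) : Prop :=
  is_greatest
    (fun w => exists p, is_least (fun u => exists q, u = f (o (combine C p q))) w)
    v.

End GameForm.

(* Main.v *)
Require Import Defs.
From mathcomp Require Import all_boot.
From mathcomp Require Import zify.
From Stdlib Require Import ClassicalEpsilon FunctionalExtensionality Classical.
Set Implicit Arguments. Unset Strict Implicit. Unset Printing Implicit Defensive.

Section L.
Variable n : nat.
Lemma ln_le (x : Ln n) : (x <= n)%N.
Proof. by rewrite -ltnS ltn_ord. Qed.
Lemma ln_eq (x y : Ln n) : (x : nat) = y -> x = y.
Proof. exact: val_inj. Qed.
Lemma v_inord m : (m <= n)%N -> ((inord m : Ln n) : nat) = m.
Proof. by move=> h; rewrite inordK. Qed.
Lemma v_lone : ((lone n) : nat) = n. Proof. by []. Qed.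
Lemma v_lzero : ((lzero n) : nat) = 0. Proof. by []. Qed.
Lemma v_lneg (x : Ln n) : ((lneg x) : nat) = n - x.
Proof. by rewrite /lneg v_inord // leq_subr. Qed.
Lemma v_loplus (x y : Ln n) : ((loplus x y) : nat) = minn (x + y) n.
Proof. by rewrite /loplus v_inord // geq_minr. Qed.
Lemma v_lodot (x y : Ln n) : ((lodot x y) : nat) = x + y - n.
Proof. rewrite /lodot v_inord //. have := ln_le x; have := ln_le y. lia. Qed.
Lemma v_lmin (x y : Ln n) : ((lmin x y) : nat) = minn x y.
Proof. rewrite /lmin v_inord //. have := ln_le x; lia. Qed.
Lemma ln_anti (x y : Ln n) : (x <= y)%N -> (y <= x)%N -> x = y.
Proof. move=> h1 h2; apply: ln_eq; lia. Qed.

Lemma least_ex (P : Ln n -> Prop) : (exists v, P v) -> exists v, is_least P v.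
Proof.
case=> v Pv.
suff: forall m (v : Ln n), P v -> (v <= m)%N -> exists v, is_least P v.
  by move/(_ n v Pv (ln_le v)).
elim=> [|m IH] w Pw hw.
  exists w; split=> // u _; rewrite /lle; lia.
case: (classic (exists u : Ln n, P u /\ (u <= m)%N)) => [[u [Pu hu]]|hno].
  exact: IH Pu hu.
exists w; split=> // u Pu; rewrite /lle.
case: (leqP u m) => h; last by lia.
by exfalso; apply: hno; exists u.
Qed.
Lemma pow_one k : iter k (lodot (lone n)) (lone n) = lone n.
Proof. elim: k => //= k ->; apply: ln_eq; rewrite v_lodot v_lone; lia. Qed.
Lemma pow_zero k : iter k (lodot (lzero n)) (lzero n) = lzero n.
Proof. elim: k => //= k ->; apply: ln_eq; rewrite v_lodot v_lzero; lia. Qed.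
Lemma pow_lt (x : Ln n) k : (x < n)%N -> (iter k (lodot x) x <= x - k)%N.
Proof. move=> hx; elim: k => /= [|k IH]; first lia. rewrite v_lodot; lia. Qed.
End L.

Lemma iter_fodot n S (g : S -> Ln n) k s :
  iter k (fodot g) g s = iter k (lodot (g s)) (g s).
Proof. by elim: k => //= k <-. Qed.

Section GameDir.
Variables (n : nat) (N : finType) (S : Type) (Sigma : N -> Type).
Variables (o : (forall i, Sigma i) -> S) (E : effectivity_function n N S).
Hypothesis HE : forall C f, EG_value o C f (E C f).

Lemma ge_char C f (k : nat) :
  (k <= E C f)%N <-> exists p, forall q, (k <= f (o (combine C p q)))%N.
Proof.
have [[p [[q0 eq0] lq]] gr] := HE C f.
split.
  move=> hk; exists p => q; apply: leq_trans hk _.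
  by apply: lq; exists q.
case=> p' hp.
have [w [[q1 ->] hw]] := least_ex (ex_intro (fun u => exists q, u = f (o (combine C p' q)))
   (f (o (combine C p' p'))) (ex_intro _ p' erefl)).
apply: leq_trans (hp q1) _.
apply: gr; exists p'; split; first by exists q1.
exact: hw.
Qed.

Lemma mono_comm (phi : Ln n -> Ln n)
  (Hphi : forall x y : Ln n, (x <= y)%N -> (phi x <= phi y)%N) C f :
  E C (fun s => phi (f s)) = phi (E C f).
Proof.
apply: ln_anti.
  have [p' hp] := (ge_char C (fun s => phi (f s)) (E C (fun s => phi (f s)))).1 (leqnn _).
  have [w [[q1 eqw] hw]] := least_ex (ex_intro (fun u => exists q, u = f (o (combine C p' q)))
     (f (o (combine C p' p'))) (ex_intro _ p' erefl)).
  apply: leq_trans (hp q1) _; apply: Hphi; rewrite -eqw.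
  have [_ gr] := HE C f.
  apply: gr; exists p'; split; first by exists q1.
  exact: hw.
have [p hp] := (ge_char C f (E C f)).1 (leqnn _).
apply/(ge_char C (fun s => phi (f s))); exists p => q; exact: Hphi.
Qed.

Lemma combine0 (p q : forall i, Sigma i) : combine set0 p q = q.
Proof. apply: functional_extensionality_dep => i; by rewrite /combine inE. Qed.
Lemma combineT (p q : forall i, Sigma i) : combine setT p q = p.
Proof. apply: functional_extensionality_dep => i; by rewrite /combine inE. Qed.

Lemma game_playable : truly_playable E.
Proof.
split; first split.
- move=> C f g hfg; have [p hp] := (ge_char C g (E C g)).1 (leqnn _).
  apply/(ge_char C f); exists p => q; exact: leq_trans (hp q) (hfg _).
- move=> f; rewrite /lle v_lneg.
  have [[p0 [[q0 eq0] lq]] _] := HE set0 (fneg f).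
  apply/ge_char; exists q0 => q; rewrite combineT.
  move: eq0; rewrite combine0 => /(congr1 (@nat_of_ord _)); rewrite /fneg v_lneg.
  have := ln_le (f (o q0)); lia.
- move=> C1 C2 f g dis; rewrite /lle v_lmin.
  have [p1 h1] := (ge_char C1 f (E C1 f)).1 (leqnn _).
  have [p2 h2] := (ge_char C2 g (E C2 g)).1 (leqnn _).
  apply/ge_char; exists (combine C1 p1 p2) => q.
  rewrite /fmin v_lmin.
  have e1 : combine (C1 :|: C2) (combine C1 p1 p2) q
      = combine C1 p1 (combine (C1 :|: C2) (combine C1 p1 p2) q).
    apply: functional_extensionality_dep => i; rewrite /combine !inE.
    by case: (i \in C1).
  have e2 : combine (C1 :|: C2) (combine C1 p1 p2) q
      = combine C2 p2 (combine (C1 :|: C2) (combine C1 p1 p2) q).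
    apply: functional_extensionality_dep => i; rewrite /combine !inE.
    case i1: (i \in C1); case i2: (i \in C2) => //.
    by move/disjointFr: dis => /(_ i i1); rewrite i2.
  have := h1 (combine (C1 :|: C2) (combine C1 p1 p2) q).
  have := h2 (combine (C1 :|: C2) (combine C1 p1 p2) q).
  rewrite -e1 -e2; lia.
- move=> C f; split.
    apply: (@mono_comm (fun x => loplus x x) _ C f) => x y h; rewrite !v_loplus; lia.
  apply: (@mono_comm (fun x => lodot x x) _ C f) => x y h; rewrite !v_lodot; lia.
- split=> C.
    apply: ln_anti; first exact: ln_le.
    apply/ge_char; have [[p _] _] := HE C (fconst (lone n)); exists p => q.
    by rewrite /fconst.
  have [[p [[q0 ->] _]] _] := HE C (fconst (lzero n)); by [].
pose g := fun s => if excluded_middle_informative (exists p, o p = s) then lone n else lzero n.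
exists g => f; split.
- move=> h s; rewrite /lle /fodot_pow iter_fodot /g.
  case: excluded_middle_informative => [[p ep]|_] /=; last by rewrite pow_zero.
  rewrite pow_one v_lone -ep.
  have [p0 hp0] := (ge_char set0 f n).1 ltac:(by rewrite h).
  by have := hp0 p; rewrite combine0.
- move=> h; apply: ln_anti; first exact: ln_le.
  apply/ge_char; have [[p _] _] := HE set0 f; exists p => q.
  rewrite combine0; have := h (o q); rewrite /lle /fodot_pow iter_fodot /g.
  destruct (excluded_middle_informative (exists p, o p = o q)) as [hy|hno].
    by rewrite pow_one.
  by case: hno; exists q.
Qed.
End GameDir.
Lemma pow2_ge n : (0 < n)%N -> (2 * n <= 2 ^ n)%N.
Proof.
elim: n => // n IH _; case: n IH => // n IH.
rewrite expnS; have := IH isT; lia.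
Qed.

Lemma thresh_num n k x : (0 < n)%N -> (0 < k <= n)%N -> (x <= n)%N ->
  let P := 2 ^ n in let c := (P * (k - 1) + n - 1) %/ n in
  (c < P)%N /\ minn (P * x - c * n) n = (if (k <= x)%N then n else 0).
Proof.
move=> hn hk hx P c.
have hP : (2 * n <= P)%N by apply: pow2_ge.
have hA := divn_eq (P * (k - 1) + n - 1) n.
have hr := ltn_pmod (P * (k - 1) + n - 1) hn.
rewrite -/c in hA.
set r := (P * (k - 1) + n - 1) %% n in hA hr.
have e1 : P * k = P * (k - 1) + P.
  by rewrite -mulnSr subn1 prednK //; case/andP: hk.
have e2 : (P * (k - 1) <= P * (n - 1))%N by rewrite leq_mul2l; apply/orP; right; lia.
have e3 : P * n = P * (n - 1) + P by rewrite -mulnSr subn1 prednK.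
split.
  rewrite ltnNge; apply/negP => hc.
  have : (P * n <= c * n)%N by rewrite leq_mul2r hc orbT.
  lia.
case: ifP => hkx.
  have : (P * k <= P * x)%N by rewrite leq_mul2l hkx orbT.
  lia.
have : (P * x <= P * (k - 1))%N by rewrite leq_mul2l; apply/orP; right; lia.
lia.
Qed.

Section Construct.
Variables (n : nat) (N : finType) (S : Type) (E : effectivity_function n N S).
Hypothesis hn : (0 < n)%N.
Hypotheses (Hmono : outcome_monotonic E) (HNmax : N_maximal E)
  (Hsup : superadditive E) (Hhom : homogeneous E) (Hlive : liveness E)
  (Hsafe : safety E).
Variable g : S -> Ln n.
Hypothesis Hg : forall f, E set0 f = lone n <-> fle (fodot_pow g) f.

Definition chi (X : S -> bool) : S -> Ln n :=
  fun s => if X s then lone n else lzero n.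
Definition EB C X := E C (chi X) = lone n.

Fixpoint phiL m c (x : Ln n) : Ln n :=
  if m is m'.+1 then
    let y := phiL m' c./2 x in if odd c then lodot y y else loplus y y
  else x.

Lemma phiL_val m c x : (c < 2 ^ m)%N ->
  (phiL m c x : nat) = minn (2 ^ m * x - c * n) n.
Proof.
elim: m c => [|m IH] c hc /=.
  have := ln_le x; rewrite expn0 in hc. have -> : c = 0 by lia. lia.
have hc2 : c = odd c + c./2 * 2 by rewrite muln2 odd_double_half.
have hh : (c./2 < 2 ^ m)%N by rewrite expnS in hc; lia.
have e1 : 2 ^ m.+1 * x = 2 * (2 ^ m * x) by rewrite expnS mulnA.
have e2 : c * n = odd c * n + 2 * (c./2 * n).
  by rewrite {1}hc2 mulnDl [c./2 * 2]mulnC -mulnA.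
rewrite e1 e2.
case: (odd c) => /=; [rewrite v_lodot | rewrite v_loplus]; rewrite IH //; lia.
Qed.

Lemma E_phi m c C f : E C (fun s => phiL m c (f s)) = phiL m c (E C f).
Proof.
elim: m c => [|m IH] c //=.
have [h1 h2] := Hhom C (fun s => phiL m c./2 (f s)).
case: (odd c).
  by rewrite -IH -h2.
by rewrite -IH -h1.
Qed.

Lemma thresh C f k : (0 < k <= n)%N ->
  ((k <= E C f)%N <-> EB C (fun s => (k <= f s)%N)).
Proof.
move=> hk.
set c := (2 ^ n * (k - 1) + n - 1) %/ n.
have hc : (c < 2 ^ n)%N by have [] := thresh_num hn hk (leq0n n).
have ech : chi (fun s => (k <= f s)%N) = (fun s => phiL n c (f s)).
  apply: functional_extensionality => s; apply: ln_eq.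
  rewrite phiL_val //; have [_ ->] := thresh_num hn hk (ln_le (f s)).
  by rewrite /chi; case: ifP.
rewrite /EB ech E_phi; split.
  move=> h; apply: ln_eq; rewrite phiL_val //.
  by have [_ ->] := thresh_num hn hk (ln_le (E C f)); rewrite h.
move/(congr1 (@nat_of_ord _)); rewrite phiL_val //.
have [_ ->] := thresh_num hn hk (ln_le (E C f)).
case: ifP => // _; rewrite v_lone; lia.
Qed.

Lemma crisp (C : {set N}) X : E C (chi X) = lzero n \/ E C (chi X) = lone n.
Proof.
have ef : foplus (chi X) (chi X) = chi X.
  apply: functional_extensionality => s; apply: ln_eq.
  rewrite /foplus v_loplus /chi; case: (X s); rewrite /= ?v_lone ?v_lzero; lia.
have [h _] := Hhom C (chi X); rewrite ef in h.
move/(congr1 (@nat_of_ord _)): h; rewrite v_loplus => h.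
have := ln_le (E C (chi X)).
case: (posnP (E C (chi X))) => h0 hle.
  by left; apply: ln_eq.
by right; apply: ln_eq; rewrite v_lone; lia.
Qed.

Lemma EB_ne (C : {set N}) X : EB C X -> exists s, X s.
Proof.
move=> h; apply: NNPP => hno.
have : lle (E C (chi X)) (E C (fconst (lzero n))).
  apply: Hmono => s; rewrite /lle /chi.
  case: ifP => // hx; by exfalso; apply: hno; exists s.
by rewrite h Hsafe /lle v_lone v_lzero; lia.
Qed.

Lemma coal_mono (B C : {set N}) X : B \subset C -> EB B X -> EB C X.
Proof.
move=> hBC h.
have dis : [disjoint B & C :\: B].
  rewrite -setI_eq0; apply/eqP/setP => x; rewrite !inE; by case: (x \in B); rewrite ?andbF.
have := Hsup (chi X) (fconst (lone n)) dis.
have eU : B :|: C :\: B = C.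
  apply/setP => x; rewrite !inE; case xB: (x \in B) => //=.
  by rewrite (subsetP hBC).
rewrite eU h Hlive => h2.
apply: ln_anti; first exact: ln_le.
have : lle (E C (fmin (chi X) (fconst (lone n)))) (E C (chi X)).
  apply: Hmono => s; rewrite /lle /fmin v_lmin /fconst v_lone.
  have := ln_le (chi X s); lia.
move: h2; rewrite /lle v_lmin v_lone /=; lia.
Qed.

Definition X0 s := g s == lone n.

Lemma pow_g s : g s = lone n -> fodot_pow g s = lone n.
Proof. by move=> h; rewrite /fodot_pow iter_fodot h pow_one. Qed.
Lemma pow_g0 s : g s <> lone n -> (fodot_pow g s : nat) = 0.
Proof.
move=> h; have hlt : (g s < n)%N.
  have := ln_le (g s); case: ltngtP => // e _; case: h; apply: ln_eq; by rewrite v_lone.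
rewrite /fodot_pow iter_fodot.
have := pow_lt n.-1 hlt; lia.
Qed.

Lemma EB0 X : EB set0 X <-> (forall s, X0 s -> X s).
Proof.
split.
  move=> h s /eqP hs; have := (Hg (chi X)).1 h s.
  rewrite /lle pow_g // v_lone /chi; case: (X s) => //; rewrite v_lzero; lia.
move=> h; apply/Hg => s; rewrite /lle.
case: (eqVneq (g s) (lone n)) => hs.
  by rewrite pow_g // /chi h //; apply/eqP.
by rewrite pow_g0 //; apply/eqP.
Qed.

Variables (s0 : S) (x0 : N).

Record strat := Strat { sD : {set N}; sX : S -> bool; sP : S; sT : nat }.

Definition endorsed (r : N -> strat) i : Prop :=
  [/\ i \in sD (r i),
      (forall j, j \in sD (r i) -> sD (r j) = sD (r i) /\ sX (r j) = sX (r i))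
    & EB (sD (r i)) (sX (r i))].

Definition Yok (r : N -> strat) s : Prop :=
  X0 s /\ forall i, endorsed r i -> sX (r i) s.

Definition sel (r : N -> strat) : N :=
  nth x0 (enum N) ((\sum_i sT (r i)) %% #|N|).

Definition outcome (r : N -> strat) : S :=
  epsilon (inhabits s0)
    (fun s => Yok r s /\ (Yok r (sP (r (sel r))) -> s = sP (r (sel r)))).

Lemma endorsed_in r i j : endorsed r i -> j \in sD (r i) -> endorsed r j.
Proof.
case=> hi hj hE hji; have [e1 e2] := hj j hji.
by split; rewrite ?e1 ?e2 //.
Qed.

Lemma K r : forall B : {set N}, (forall i, i \in B -> endorsed r i) ->
  (forall i, i \in B -> sD (r i) \subset B) ->
  EB B (fun s => X0 s && [forall i in B, sX (r i) s]).
Proof.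
suff: forall k (B : {set N}), (#|B| <= k)%N -> (forall i, i \in B -> endorsed r i) ->
  (forall i, i \in B -> sD (r i) \subset B) ->
  EB B (fun s => X0 s && [forall i in B, sX (r i) s]).
  by move=> H B; apply: H (leqnn _).
elim=> [|k IH] B hk hend hsub.
  have -> : B = set0 by apply/eqP; rewrite -cards_eq0; lia.
  apply/EB0 => s ->; apply/forallP => i; by rewrite inE.
case: (set_0Vmem B) => [->|[i iB]].
  apply/EB0 => s ->; apply/forallP => i; by rewrite inE.
set D := sD (r i); set B' := B :\: D.
have hi := hend i iB; have [iD hD hED] := hi.
have DB : D \subset B := hsub i iB.
have hk' : (#|B'| <= k)%N.
  have : (0 < #|B :&: D|)%N by apply/card_gt0P; exists i; rewrite inE iB.
  rewrite /B' cardsD; lia.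
have hend' : forall j, j \in B' -> endorsed r j.
  by move=> j; rewrite inE => /andP [_ /hend].
have hsub' : forall j, j \in B' -> sD (r j) \subset B'.
  move=> j; rewrite inE => /andP [jD jB]; apply/subsetP => x hx.
  rewrite inE (subsetP (hsub j jB)) // andbT.
  apply/negP => xD.
  have [hj1 hj2 _] := hend j jB.
  have [e1 _] := hj2 x hx; have [e2 _] := hD x xD.
  by move: jD; rewrite /D -e2 e1 hj1.
have IHB := IH B' hk' hend' hsub'.
have dis : [disjoint D & B'].
  rewrite -setI_eq0; apply/eqP/setP => x; rewrite !inE; by case: (x \in D); rewrite ?andbF.
have := Hsup (chi (sX (r i))) (chi (fun s => X0 s && [forall j in B', sX (r j) s])) dis.
have eU : D :|: B' = B.
  apply/setP => x; rewrite !inE; case xD: (x \in D) => //=.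
  by rewrite (subsetP DB).
rewrite eU hED IHB => h2.
apply: ln_anti; first exact: ln_le.
have hm : lle (E B (fmin (chi (sX (r i))) (chi (fun s => X0 s && [forall j in B', sX (r j) s]))))
   (E B (chi (fun s => X0 s && [forall i0 in B, sX (r i0) s]))).
  apply: Hmono => s; rewrite /lle /fmin v_lmin /chi.
  case hx: (sX (r i) s); case hz: (X0 s && _); rewrite ?v_lone ?v_lzero ?minnn ?min0n ?minn0 //.
  case: ifP => // /negP []; case/andP: hz => -> /forallP hz /=.
  apply/forallP => j; apply/implyP => jB.
  case jD: (j \in D).
    by have [_ ->] := hD j jD.
  by have := hz j; rewrite inE jD jB.
move: h2 hm; rewrite /lle v_lmin v_lone /=; lia.
Qed.
Definition asb (P : Prop) : bool := if excluded_middle_informative P then true else false.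
Lemma asbP P : asb P <-> P.
Proof. by rewrite /asb; case: excluded_middle_informative. Qed.

Lemma Yok_ex r : exists s, Yok r s.
Proof.
set B := [set i | asb (endorsed r i)].
have hB : forall i, i \in B -> endorsed r i by move=> i; rewrite inE => /asbP.
have hS : forall i, i \in B -> sD (r i) \subset B.
  move=> i iB; apply/subsetP => k hk; rewrite inE; apply/asbP.
  exact: endorsed_in (hB i iB) hk.
have [s /andP [h1 /forallP h2]] := EB_ne (K hB hS).
exists s; split=> // i hi.
by have := h2 i; rewrite inE; move/implyP; apply; apply/asbP.
Qed.

Lemma outcome_spec r : Yok r (outcome r) /\
  (Yok r (sP (r (sel r))) -> outcome r = sP (r (sel r))).
Proof.
apply: (epsilon_spec (inhabits s0)
  (fun s => Yok r s /\ (Yok r (sP (r (sel r))) -> s = sP (r (sel r))))).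
case: (classic (Yok r (sP (r (sel r))))) => h.
  by exists (sP (r (sel r))).
have [s hs] := Yok_ex r; by exists s.
Qed.

Definition p0 : N -> strat := fun _ => Strat set0 xpredT s0 0.

Lemma dir1 (C : {set N}) (X : S -> bool) : EB C X ->
  exists p : N -> strat, forall q : N -> strat,
    X (outcome (combine (Sigma := fun _ => strat) C p q)).
Proof.
move=> h.
case: (set_0Vmem C) => [eC|[i iC]].
  subst C; exists p0 => q; have [[hx _] _] := outcome_spec (combine set0 p0 q).
  move: h => /EB0; apply; exact: hx.
exists (fun _ => Strat C X s0 0) => q.
set r := combine _ _ _.
have hr : forall j, j \in C -> r j = Strat C X s0 0.
  by move=> j jC; rewrite /r /combine jC.
have [[_ hy] _] := outcome_spec r.
have := hy i; rewrite hr //=; apply; split; rewrite hr //=.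
by move=> j jC; rewrite hr.
Qed.

Lemma endorsed_ext (r r' : N -> strat) i :
  (forall j, sD (r j) = sD (r' j) /\ sX (r j) = sX (r' j)) ->
  endorsed r i -> endorsed r' i.
Proof.
move=> he [h1 h2 h3]; have [e1 e2] := he i.
split; rewrite -?e1 -?e2 //.
move=> j hj; have [f1 f2] := he j; rewrite -f1 -f2; exact: h2.
Qed.

Lemma Yok_ext (r r' : N -> strat) s :
  (forall j, sD (r j) = sD (r' j) /\ sX (r j) = sX (r' j)) ->
  Yok r s -> Yok r' s.
Proof.
move=> he [h1 h2]; split=> // i hi.
have [_ <-] := he i; apply: h2; apply: endorsed_ext hi.
by move=> j; have [-> ->] := he j.
Qed.

Lemma modfix m k R : (k < m)%N -> (k + (m - R %% m) + R) %% m = k.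
Proof.
move=> hk; have hm : (0 < m)%N by lia.
rewrite {2}(divn_eq R m); have hr := ltn_pmod R hm.
have -> : k + (m - R %% m) + (R %/ m * m + R %% m) = (R %/ m).+1 * m + k.
  rewrite mulSn; lia.
by rewrite modnMDl modn_small.
Qed.

Lemma dir2 (C : {set N}) (X : S -> bool) (p : N -> strat) :
  (forall q : N -> strat, X (outcome (combine (Sigma := fun _ => strat) C p q))) ->
  EB C X.
Proof.
move=> hq; apply: NNPP => hno.
case: (classic (forall j, j \in C)) => hT.
  have eC : C = setT by apply/setP => j; rewrite inE hT.
  have hz : E setT (chi X) = lzero n.
    by case: (crisp setT X) => //; rewrite -eC.
  have := HNmax (chi X); rewrite hz /lle v_lneg v_lzero => h.
  have ef : fneg (chi X) = chi (fun s => ~~ X s).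
    apply: functional_extensionality => s; apply: ln_eq.
    rewrite /fneg /chi v_lneg; case: (X s); rewrite /= ?v_lone ?v_lzero; lia.
  have hE : EB set0 (fun s => ~~ X s).
    apply: ln_eq; rewrite v_lone -ef; have := ln_le (E set0 (fneg (chi X))); lia.
  have [[hy _] _] := outcome_spec (combine C p p).
  have := (EB0 _).1 hE _ hy; by rewrite hq.
have [j0 j0C] : exists j0, j0 \notin C.
  apply: NNPP => hn0; apply: hT => j; apply: NNPP => hj; apply: hn0; exists j.
  by apply/negP.
pose qq (sp : S) (tt : nat) : N -> strat :=
  fun j => Strat [set j] xpredT sp (if j == j0 then tt else 0).
pose rr sp tt : N -> strat := combine (Sigma := fun _ => strat) C p (qq sp tt).
have hext : forall sp tt sp' tt' j,
    sD (rr sp tt j) = sD (rr sp' tt' j) /\ sX (rr sp tt j) = sX (rr sp' tt' j).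
  by move=> sp tt sp' tt' j; rewrite /rr /combine; case: (j \in C).
set r0 := rr s0 0.
have [ss [hys hxs]] : exists s, Yok r0 s /\ ~ X s.
  apply: NNPP => hn1.
  have hall : forall s, Yok r0 s -> X s.
    move=> s hs; apply: NNPP => hxs; apply: hn1; by exists s.
  set B := [set i in C | asb (endorsed r0 i)].
  have hB : forall i, i \in B -> endorsed r0 i.
    by move=> i; rewrite inE => /andP [_ /asbP].
  have hS : forall i, i \in B -> sD (r0 i) \subset B.
    move=> i iB; apply/subsetP => k hk; rewrite inE; apply/andP; split; last first.
      apply/asbP; exact: endorsed_in (hB i iB) hk.
    apply: NNPP => /negP kC.
    have [hi1 hi2 _] := hB i iB.
    have [e1 _] := hi2 k hk.
    have ek : sD (r0 k) = [set k] by rewrite /r0 /rr /combine (negbTE kC).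
    move: iB; rewrite inE => /andP [iC _].
    move: hi1; rewrite -e1 ek inE => /eqP eik.
    by move: kC; rewrite -eik iC.
  have hK := K hB hS.
  have hBX : EB B X.
    apply: ln_anti; first exact: ln_le.
    rewrite -{1}hK; apply: Hmono => s; rewrite /lle /chi.
    case hz: (X0 s && _) => //; rewrite hall //.
    case/andP: hz => h1 /forallP h2; split=> // i hi.
    case iC: (i \in C).
      have := h2 i; rewrite inE iC /=.
      have -> : asb (endorsed r0 i) by apply/asbP.
      by [].
    by rewrite /r0 /rr /combine iC.
  apply: hno; apply: coal_mono hBX.
  by apply/subsetP => i; rewrite inE => /andP [].
set R := \sum_(i | i != j0) sT (r0 i).
set k0 := index j0 (enum N).
have hk0 : (k0 < #|N|)%N by rewrite cardE index_mem mem_enum.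
set tt := k0 + (#|N| - R %% #|N|).
have hsel : sel (rr ss tt) = j0.
  rewrite /sel (bigD1 j0) //=.
  have -> : sT (rr ss tt j0) = tt by rewrite /rr /combine (negbTE j0C) /= eqxx.
  have -> : \sum_(i | i != j0) sT (rr ss tt i) = R.
    apply: eq_bigr => i hi; rewrite /r0 /rr /combine.
    by case: (i \in C) => //=; rewrite (negbTE hi).
  by rewrite modfix // nth_index // mem_enum.
have [_ ho] := outcome_spec (rr ss tt).
have hsp : sP (rr ss tt (sel (rr ss tt))) = ss.
  by rewrite hsel /rr /combine (negbTE j0C).
rewrite hsp in ho.
have ho' := ho (Yok_ext (hext s0 0 ss tt) hys).
by apply: hxs; rewrite -ho'; apply: hq.
Qed.

Lemma EG_ok (C : {set N}) (f : S -> Ln n) :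
  EG_value (Sigma := fun _ => strat) outcome C f (E C f).
Proof.
set e := E C f.
have [p hp] : exists p : N -> strat, forall q : N -> strat,
    (e <= f (outcome (combine (Sigma := fun _ => strat) C p q)))%N.
  case: (posnP e) => he.
    by exists p0 => q; rewrite he.
  have /(thresh C f) hEB : (0 < e <= n)%N by rewrite he ln_le.
  have [p hp] := dir1 (hEB.1 (leqnn _)).
  by exists p.
split.
  exists p; split=> [|w [q ->]]; last exact: hp.
  case: (ltnP e n) => hen.
    apply: NNPP => hno.
    have : EB C (fun s => (e.+1 <= f s)%N).
      apply: (dir2 (p := p)) => q.
      have := hp q; rewrite leq_eqVlt => /orP [/eqP h|//].
      by exfalso; apply: hno; exists q; apply: ln_eq.
    move=> hb; have hk : (0 < e.+1 <= n)%N by apply/andP; split; lia.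
    have := (thresh C f hk).2 hb; rewrite -/e; lia.
  exists p; apply: ln_eq; apply/eqP; rewrite eqn_leq hp /=.
  apply: leq_trans (ln_le _) hen.
move=> w [p' [_ hw]].
rewrite /lle; case: (posnP w) => [->//|hw0].
have : EB C (fun s => (w <= f s)%N).
  apply: (dir2 (p := p')) => q; apply: hw; by exists q.
move=> hb; have hk : (0 < w <= n)%N by rewrite hw0 ln_le.
exact: (thresh C f hk).2 hb.
Qed.

End Construct.

Theorem mainTheorem5 (n : nat) (N : finType) (S : Type)
    (hn : (0 < n)%N) (hN : (2 <= #|N|)%N) (hS : exists s t : S, s <> t)
    (E : effectivity_function n N S) :
  truly_playable E <->
  exists (Sigma : N -> Type) (_ : forall i, inhabited (Sigma i))
         (o : (forall i, Sigma i) -> S),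
    forall (C : {set N}) (f : S -> Ln n), EG_value o C f (E C f).
Proof.
split.
  case=> [[Hmono HNmax Hsup Hhom [Hlive Hsafe]] [g Hg]].
  have [s0 _] := hS.
  have : (0 < #|N|)%N by lia.
  case/card_gt0P => x0 _.
  exists (fun _ => strat N S).
  exists (fun _ => inhabits (Strat set0 xpredT s0 0)).
  exists (outcome E g s0 x0).
  move=> C f.
  exact: (EG_ok hn Hmono HNmax Hsup Hhom Hlive Hsafe Hg s0 x0 C f).
case=> Sigma [_ [o HE]].
exact: (game_playable HE).
Qed.
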